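(* Let $M$ be a model of a complete affine theory which has an elementary substructure $K\preccurlyeq M$ whose underlying metric space is compact. Let $D_1\subseteq D_2\subseteq\cdots$ be definable subsets of $M^n$. Then $D=\overline{\bigcup_nD_n}$ is definable.
   Context: Affine continuous logic: $L$-structures are complete metric spaces $(M,d)$ with $d\le1$ and Lipschitz interpretations of function symbols and $[0,1]$-valued relation symbols. Affine formulas are built from $1$ and atomic formulas (including $d$) using only $r\cdot\phi$ ($r\in\mathbb R$), $\phi+\psi$, $\inf_x$, $\sup_x$; $K\preccurlyeq M$ means every affine formula with parameters from $K$ has the same value in $K$ and $M$. A predicate $P:M^n\to\mathbb R$ is definable (without parameters) if it is a uniform limit on $M^n$ of $\phi_k^M$ for affine formulas $\phi_k$. A closed $D\subseteq M^n$ is definable if $\bar x\mapsto d(\bar x,D)=\inf_{\bar a\in D}d(\bar x,\bar a)$ is definable. $\overline{X}$ denotes topological closure. *)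

(* Defs.v *)
From Stdlib Require Import Reals.
From Coquelicot Require Import Rbar Lub.
From mathcomp Require Import ssreflect ssrfun ssrbool eqtype ssrnat seq fintype bigop.

Set Implicit Arguments.
Unset Strict Implicit.
Unset Printing Implicit Defensive.

Local Open Scope R_scope.

Record language := Language {
  fsym : Type;
  farity : fsym -> nat;
  rsym : Type;
  rarity : rsym -> nat }.

Section Syntax.
Variable L : language.

Inductive term : Type :=
  | Var : nat -> term
  | App : forall f : fsym L, ('I_(farity f) -> term) -> term.

Inductive formula : Type :=
  | FOne : formula
  | FRel : forall r : rsym L, ('I_(rarity r) -> term) -> formula
  | FDist : term -> term -> formula
  | FScale : R -> formula -> formula
  | FAdd : formula -> formula -> formula
  | FInf : nat -> formula -> formula
  | FSup : nat -> formula -> formula.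

Fixpoint fv_term (t : term) : seq nat :=
  match t with
  | Var i => [:: i]
  | App f args => \big[cat/[::]]_(j < farity f) fv_term (args j)
  end.

Fixpoint fv (phi : formula) : seq nat :=
  match phi with
  | FOne => [::]
  | FRel r args => \big[cat/[::]]_(j < rarity r) fv_term (args j)
  | FDist t1 t2 => fv_term t1 ++ fv_term t2
  | FScale _ p => fv p
  | FAdd p q => fv p ++ fv q
  | FInf x p => filter (fun y => y != x) (fv p)
  | FSup x p => filter (fun y => y != x) (fv p)
  end.

Definition fv_lt (n : nat) (phi : formula) : bool :=
  all (fun i => (i < n)%N) (fv phi).
End Syntax.

(** max metric on M^n ('I_n -> M); it is 0 for n = 0 *)
Definition tdist (M : Type) (d : M -> M -> R) (n : nat) (x y : 'I_n -> M) : R :=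
  \big[Rmax/0]_(i < n) d (x i) (y i).

Definition is_metric_le1 (M : Type) (d : M -> M -> R) : Prop :=
  (forall x, d x x = 0) /\
  (forall x y, d x y = 0 -> x = y) /\
  (forall x y, d x y = d y x) /\
  (forall x y z, d x z <= d x y + d y z) /\
  (forall x y, d x y <= 1).

Definition cvg_to (M : Type) (d : M -> M -> R) (u : nat -> M) (a : M) : Prop :=
  forall eps, 0 < eps -> exists N, forall k, (N <= k)%N -> d (u k) a < eps.

Definition cauchy (M : Type) (d : M -> M -> R) (u : nat -> M) : Prop :=
  forall eps, 0 < eps -> exists N, forall k l, (N <= k)%N -> (N <= l)%N -> d (u k) (u l) < eps.

Definition complete_metric (M : Type) (d : M -> M -> R) : Prop :=
  forall u, cauchy d u -> exists a, cvg_to d u a.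

Definition compact_metric (M : Type) (d : M -> M -> R) : Prop :=
  forall u : nat -> M, exists (s : nat -> nat) (a : M),
    (forall k, (s k < s k.+1)%N) /\ cvg_to d (fun k => u (s k)) a.

Record structure (L : language) := Structure {
  car :> Type;
  point : car;                       (* structures are nonempty *)
  mdist : car -> car -> R;
  finterp : forall f : fsym L, ('I_(farity f) -> car) -> car;
  rinterp : forall r : rsym L, ('I_(rarity r) -> car) -> R }.

Definition is_L_structure (L : language) (M : structure L) : Prop :=
  is_metric_le1 (@mdist L M) /\ complete_metric (@mdist L M) /\
  (forall f, exists C, forall a b : 'I_(farity f) -> M,
      mdist (finterp a) (finterp b) <= C * tdist (@mdist L M) a b) /\
  (forall r (a : 'I_(rarity r) -> M), 0 <= rinterp a <= 1) /\
  (forall r, exists C, forall a b : 'I_(rarity r) -> M,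
      Rabs (rinterp a - rinterp b) <= C * tdist (@mdist L M) a b).

Definition Rinf (S : R -> Prop) : R := real (Glb_Rbar S).
Definition Rsup (S : R -> Prop) : R := real (Lub_Rbar S).

Section Semantics.
Variables (L : language) (M : structure L).

Definition upd (v : nat -> M) (x : nat) (a : M) : nat -> M :=
  fun y => if y == x then a else v y.

Fixpoint eval_term (v : nat -> M) (t : term L) : M :=
  match t with
  | Var i => v i
  | App f args => finterp (fun j => eval_term v (args j))
  end.

Fixpoint eval (v : nat -> M) (phi : formula L) : R :=
  match phi with
  | FOne => 1
  | FRel r args => rinterp (fun j => eval_term v (args j))
  | FDist t1 t2 => mdist (eval_term v t1) (eval_term v t2)
  | FScale c p => c * eval v p
  | FAdd p q => eval v p + eval v q
  | FInf x p => Rinf (fun s => exists a : M, s = eval (upd v x a) p)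
  | FSup x p => Rsup (fun s => exists a : M, s = eval (upd v x a) p)
  end.

Definition tval (n : nat) (x : 'I_n -> M) : nat -> M :=
  fun i => match insub i with Some j => x j | None => point M end.

Definition evalt (n : nat) (phi : formula L) (x : 'I_n -> M) : R :=
  eval (tval x) phi.

(** definable predicate (without parameters) on M^n *)
Definition definable_pred (n : nat) (P : ('I_n -> M) -> R) : Prop :=
  exists phis : nat -> formula L,
    (forall k, fv_lt n (phis k)) /\
    forall eps, 0 < eps -> exists N, forall k, (N <= k)%N ->
      forall x, Rabs (evalt (phis k) x - P x) <= eps.

(** distance to a subset of M^n (max metric); the inf is taken together with 1
    (the diameter bound), so that it is the usual inf for nonempty D and the
    constant 1 for D empty *)
Definition dist_set (n : nat) (D : ('I_n -> M) -> Prop) (x : 'I_n -> M) : R :=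
  Rinf (fun s => s = 1 \/ exists a, D a /\ s = tdist (@mdist L M) x a).

Definition closed_set (n : nat) (D : ('I_n -> M) -> Prop) : Prop :=
  forall x, (forall eps, 0 < eps -> exists a, D a /\ tdist (@mdist L M) x a < eps) -> D x.

Definition closure (n : nat) (D : ('I_n -> M) -> Prop) : ('I_n -> M) -> Prop :=
  fun x => forall eps, 0 < eps -> exists a, D a /\ tdist (@mdist L M) x a < eps.

Definition definable_set (n : nat) (D : ('I_n -> M) -> Prop) : Prop :=
  closed_set D /\ definable_pred (dist_set D).
End Semantics.

(** elementary embedding K -> M: every affine formula with parameters from K
    (i.e. every formula under every valuation in K) has the same value in K and M;
    K ≼ M is identified with its image under such an embedding *)
Definition elementary (L : language) (K M : structure L) (iota : K -> M) : Prop :=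
  forall (phi : formula L) (v : nat -> K), eval v phi = eval (fun i => iota (v i)) phi.

(* Main.v *)
Require Import Defs.
From Stdlib Require Import Reals Lra FunctionalExtensionality PropExtensionality ClassicalEpsilon Classical.
From Coquelicot Require Import Rbar Lub.
From mathcomp Require Import ssreflect ssrfun ssrbool eqtype ssrnat seq fintype bigop.

Set Implicit Arguments.
Unset Strict Implicit.
Unset Printing Implicit Defensive.
Local Open Scope R_scope.

Lemma abs_le_inv (a e : R) : Rabs a <= e -> - e <= a <= e.
Proof. move=> H; have := Rle_abs a; have := Rle_abs (- a); rewrite Rabs_Ropp; lra. Qed.

Lemma Rsup_ub (S : R -> Prop) B e : (forall s, S s -> s <= B) -> S e -> e <= Rsup S.
Proof.
move=> HB He; have [Hub Hl] := Lub_Rbar_correct S.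
have H1 := Hub e He; have H2 := Hl (Rbar.Finite B) HB.
rewrite /Rsup; move: H1 H2; case: (Lub_Rbar S) => //=.
Qed.

Lemma Rsup_lub (S : R -> Prop) c e : S e -> (forall s, S s -> s <= c) -> Rsup S <= c.
Proof.
move=> He HB; have [Hub Hl] := Lub_Rbar_correct S.
have H1 := Hub e He; have H2 := Hl (Rbar.Finite c) HB.
rewrite /Rsup; move: H1 H2; case: (Lub_Rbar S) => //=.
Qed.

Lemma Rinf_lb (S : R -> Prop) B e : (forall s, S s -> B <= s) -> S e -> Rinf S <= e.
Proof.
move=> HB He; have [Hub Hl] := Glb_Rbar_correct S.
have H1 := Hub e He; have H2 := Hl (Rbar.Finite B) HB.
rewrite /Rinf; move: H1 H2; case: (Glb_Rbar S) => //=.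
Qed.

Lemma Rinf_glb (S : R -> Prop) c e : S e -> (forall s, S s -> c <= s) -> c <= Rinf S.
Proof.
move=> He HB; have [Hub Hl] := Glb_Rbar_correct S.
have H1 := Hub e He; have H2 := Hl (Rbar.Finite c) HB.
rewrite /Rinf; move: H1 H2; case: (Glb_Rbar S) => //=.
Qed.

Section Tdist.
Variables (M : Type) (d : M -> M -> R) (Hm : is_metric_le1 d).

Lemma d_ge0 x y : 0 <= d x y.
Proof. case: Hm => [H0 [_ [Hs [Ht _]]]]; have := Ht x y x; rewrite H0 (Hs y x); lra. Qed.

Lemma tdist_le n (x y : 'I_n -> M) c : 0 <= c -> (forall i, d (x i) (y i) <= c) -> tdist d x y <= c.
Proof. move=> Hc H; rewrite /tdist; apply: (big_ind (fun r => r <= c)) => // a b; exact: Rmax_lub. Qed.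

Lemma tdist_lt n (x y : 'I_n -> M) c : 0 < c -> (forall i, d (x i) (y i) < c) -> tdist d x y < c.
Proof. move=> Hc H; rewrite /tdist; apply: (big_ind (fun r => r < c)) => // a b; exact: Rmax_lub_lt. Qed.

Lemma tdist_ge0 n (x y : 'I_n -> M) : 0 <= tdist d x y.
Proof.
rewrite /tdist; apply: (big_ind (fun r => 0 <= r)); first exact: Rle_refl.
  by move=> a b Ha Hb; apply: Rle_trans (Rmax_l a b).
by move=> i _; apply: d_ge0.
Qed.

Lemma bigmax_coord n (F : 'I_n -> R) (s : seq 'I_n) i : i \in s -> F i <= \big[Rmax/0]_(j <- s) F j.
Proof.
elim: s => // a s IH; rewrite in_cons big_cons => /orP [/eqP -> | Hi].
  exact: Rmax_l.
apply: Rle_trans (IH Hi) _; exact: Rmax_r.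
Qed.

Lemma tdist_coord n (x y : 'I_n -> M) i : d (x i) (y i) <= tdist d x y.
Proof. exact: (bigmax_coord (fun j => d (x j) (y j)) (mem_index_enum i)). Qed.

Lemma tdist_sym n (x y : 'I_n -> M) : tdist d x y = tdist d y x.
Proof. rewrite /tdist; apply: eq_bigr => i _; case: Hm => [_ [_ [Hs _]]]; exact: Hs. Qed.

Lemma tdist_tri n (x y z : 'I_n -> M) : tdist d x z <= tdist d x y + tdist d y z.
Proof.
apply: tdist_le; first by have := tdist_ge0 x y; have := tdist_ge0 y z; lra.
move=> i; case: Hm => [_ [_ [_ [Ht _]]]]; apply: Rle_trans (Ht _ (y i) _) _.
have := tdist_coord x y i; have := tdist_coord y z i; lra.
Qed.

Lemma tdist_refl n (x : 'I_n -> M) : tdist d x x = 0.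
Proof.
apply: Rle_antisym; last exact: tdist_ge0.
apply: tdist_le; first lra. move=> i; case: Hm => [H0 _]; rewrite H0; lra.
Qed.

End Tdist.
Lemma bigcat_mem m (F : 'I_m -> seq nat) (s : seq 'I_m) j x :
  j \in s -> x \in F j -> x \in \big[cat/[::]]_(i <- s) F i.
Proof.
elim: s => // a s IH; rewrite in_cons big_cons mem_cat => /orP [/eqP -> -> // | Hj Hx].
by rewrite IH ?orbT.
Qed.

Section Eval.
Variables (L : language) (S : structure L).

Lemma eval_term_ext (v w : nat -> S) (t : term L) :
  (forall i, i \in fv_term t -> v i = w i) -> eval_term v t = eval_term w t.
Proof.
move: t; fix IH 1 => t; case: t => [i | f args] H /=.
  by apply: H; rewrite /= inE.
congr finterp; apply: functional_extensionality => j; apply: IH => i Hi.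
apply: H => /=; exact: (bigcat_mem (mem_index_enum j) Hi).
Qed.

Lemma eval_ext (phi : formula L) : forall (v w : nat -> S),
  (forall i, i \in fv phi -> v i = w i) -> eval v phi = eval w phi.
Proof.
elim: phi => [|r args|t1 t2|c p IH|p IHp q IHq|x p IH|x p IH] v w H /=.
- by [].
- congr rinterp; apply: functional_extensionality => j; apply: eval_term_ext => i Hi.
  apply: H => /=; exact: (bigcat_mem (mem_index_enum j) Hi).
- by rewrite (@eval_term_ext v w t1) ?(@eval_term_ext v w t2) // => i Hi; apply: H; rewrite /= mem_cat Hi ?orbT.
- by rewrite (IH v w).
- by rewrite (IHp v w) ?(IHq v w) // => i Hi; apply: H; rewrite /= mem_cat Hi ?orbT.
- congr Rinf; apply: functional_extensionality => s; apply: propositional_extensionality.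
  have E : forall a, eval (upd v x a) p = eval (upd w x a) p.
    move=> a; apply: IH => i Hi; rewrite /upd; case: eqP => // /eqP Hix.
    by apply: H; rewrite /= mem_filter Hix.
  by split; case=> a ->; exists a; rewrite E.
- congr Rsup; apply: functional_extensionality => s; apply: propositional_extensionality.
  have E : forall a, eval (upd v x a) p = eval (upd w x a) p.
    move=> a; apply: IH => i Hi; rewrite /upd; case: eqP => // /eqP Hix.
    by apply: H; rewrite /= mem_filter Hix.
  by split; case=> a ->; exists a; rewrite E.
Qed.

Lemma eval_fv_lt n (phi : formula L) (u v : nat -> S) :
  fv_lt n phi -> (forall i, (i < n)%N -> u i = v i) -> eval u phi = eval v phi.
Proof.
move=> Hf H; apply: eval_ext => i Hi; apply: H.
exact: (allP Hf i Hi).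
Qed.

Lemma tval_lt n (x : 'I_n -> S) i (Hi : (i < n)%N) : tval x i = x (Ordinal Hi).
Proof. by rewrite /tval insubT. Qed.

Lemma eval_tuple n (phi : formula L) (u : nat -> S) :
  fv_lt n phi -> eval u phi = evalt phi (fun i : 'I_n => u i).
Proof.
move=> Hf; rewrite /evalt; apply: (eval_fv_lt Hf) => i Hi.
by rewrite tval_lt.
Qed.

Fixpoint supn (m : nat) (chi : formula L) : formula L :=
  match m with 0 => chi | m'.+1 => FSup m' (supn m' chi) end.

Lemma supn_prop (chi : formula L) B (HB : forall u : nat -> S, eval u chi <= B) m :
 (forall w : nat -> S, eval w (supn m chi) <= B) /\
 (forall w u : nat -> S, (forall i, (m <= i)%N -> u i = w i) -> eval u chi <= eval w (supn m chi)) /\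
 (forall (w : nat -> S) c, (forall u : nat -> S, (forall i, (m <= i)%N -> u i = w i) -> eval u chi <= c) ->
     eval w (supn m chi) <= c).
Proof.
elim: m => [|m [IH1 [IH2 IH3]]].
  split=> //; split.
    move=> w u H; have -> : u = w by apply: functional_extensionality => i; apply: H.
    exact: Rle_refl.
  by move=> w c H; apply: H.
have P3 : forall (w : nat -> S) c, (forall u : nat -> S, (forall i, (m.+1 <= i)%N -> u i = w i) -> eval u chi <= c) ->
     eval w (supn m.+1 chi) <= c.
  move=> w c H /=; apply: (@Rsup_lub _ _ (eval (upd w m (point S)) (supn m chi))).
    by exists (point S).
  move=> s [a ->]; apply: IH3 => u Hu; apply: H => i Hi.
  rewrite Hu ?(ltnW Hi) // /upd; case: eqP => // Him; by rewrite Him ltnn in Hi.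
split; first by move=> w; apply: P3 => u _; apply: HB.
split=> // w u H /=.
apply: Rle_trans (IH2 (upd w m (u m)) u _) _.
  move=> i Hi; rewrite /upd; case: eqP => [-> //|/eqP Him]; apply: H.
  by rewrite ltn_neqAle eq_sym Him.
apply: (@Rsup_ub _ B); last by exists (u m).
by move=> s [a ->]; apply: IH1.
Qed.

End Eval.
Section Dist.
Variables (L : language) (M : structure L) (Hm : is_metric_le1 (@mdist L M)).
Variable n : nat.
Local Notation td := (tdist (@mdist L M)).

Lemma dist_ge0 (D : ('I_n -> M) -> Prop) x : 0 <= dist_set D x.
Proof.
apply: (@Rinf_glb _ _ 1); first by left.
move=> s [->|[a [_ ->]]]; [lra | exact: tdist_ge0].
Qed.

Lemma dist_le1 (D : ('I_n -> M) -> Prop) x : dist_set D x <= 1.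
Proof.
apply: (@Rinf_lb _ 0); last by left.
move=> s [->|[a [_ ->]]]; [lra | exact: tdist_ge0].
Qed.

Lemma dist_le (D : ('I_n -> M) -> Prop) x a : D a -> dist_set D x <= td x a.
Proof.
move=> Ha; apply: (@Rinf_lb _ 0); last by right; exists a.
move=> s [->|[b [_ ->]]]; [lra | exact: tdist_ge0].
Qed.

Lemma dist_glb (D : ('I_n -> M) -> Prop) x c :
  c <= 1 -> (forall a, D a -> c <= td x a) -> c <= dist_set D x.
Proof.
move=> H1 H; apply: (@Rinf_glb _ _ 1); first by left.
by move=> s [->|[a [Ha ->]]]; [ | apply: H].
Qed.

Lemma dist_lip (D : ('I_n -> M) -> Prop) x y : dist_set D x <= dist_set D y + td x y.
Proof.
suff : dist_set D x - td x y <= dist_set D y by lra.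
apply: dist_glb.
  have := dist_le1 D x; have := tdist_ge0 Hm x y; lra.
move=> a Ha; have := dist_le x Ha; have := tdist_tri Hm x y a; lra.
Qed.

Lemma dist_mono (D E : ('I_n -> M) -> Prop) x :
  (forall a, D a -> E a) -> dist_set E x <= dist_set D x.
Proof.
move=> H; apply: dist_glb; first exact: dist_le1.
move=> a Ha; exact: dist_le (H a Ha).
Qed.

End Dist.

Lemma strict_mono (s : nat -> nat) : (forall k, (s k < s k.+1)%N) -> forall k l, (k <= l)%N -> (s k <= s l)%N.
Proof.
move=> H k l /subnKC <-; elim: (l - k)%N => [|m IH]; first by rewrite addn0.
rewrite addnS; apply: leq_trans IH (ltnW (H _)).
Qed.

Lemma strict_ge (s : nat -> nat) : (forall k, (s k < s k.+1)%N) -> forall k, (k <= s k)%N.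
Proof. move=> H; elim=> // k IH; exact: leq_ltn_trans IH (H k). Qed.

Lemma cpt_tuple (T : Type) (d : T -> T -> R) (Hc : compact_metric d) n (u : nat -> 'I_n -> T) :
  exists (s : nat -> nat) (a : 'I_n -> T), (forall k, (s k < s k.+1)%N) /\
   forall eps, 0 < eps -> exists N, forall k, (N <= k)%N -> forall i, d (u (s k) i) (a i) < eps.
Proof.
have : forall m, (m <= n)%N -> exists (s : nat -> nat) (a : 'I_n -> T), (forall k, (s k < s k.+1)%N) /\
   forall eps, 0 < eps -> exists N, forall k, (N <= k)%N -> forall i : 'I_n, (i < m)%N -> d (u (s k) i) (a i) < eps.
  elim=> [_|m IH Hmn].
    exists id, (u 0%N); split=> // eps _; exists 0%N => k _ i //.
  have [s [a [Hs Ha]]] := IH (ltnW Hmn).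
  pose i0 := Ordinal Hmn.
  have [s' [a0 [Hs' Ha0]]] := Hc (fun k => u (s k) i0).
  exists (fun k => s (s' k)), (fun i => if i == i0 then a0 else a i); split.
    move=> k; exact: leq_trans (Hs _) (strict_mono Hs (Hs' k)).
  move=> eps He; have [N1 HN1] := Ha eps He; have [N2 HN2] := Ha0 eps He.
  exists (maxn N1 N2) => k Hk i Hi; case: eqP => [->|/eqP Hne].
    by apply: HN2; apply: leq_trans Hk; apply: leq_maxr.
  apply: HN1; last first.
    by rewrite ltn_neqAle -ltnS Hi andbT; apply: contra Hne => /eqP E; apply/eqP/val_inj.
  apply: leq_trans (strict_ge Hs' k); apply: leq_trans Hk; apply: leq_maxl.
move=> /(_ n (leqnn n)) [s [a [Hs Ha]]]; exists s, a; split=> // eps He.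
have [N HN] := Ha eps He; exists N => k Hk i; exact: HN.
Qed.
Theorem mainTheorem20 (L : language) (M K : structure L) (iota : K -> M)
  (HM : is_L_structure M) (HK : is_L_structure K)
  (Helem : elementary iota)
  (Hcpt : compact_metric (@mdist L K))
  (n : nat) (Ds : nat -> ('I_n -> M) -> Prop)
  (Hdef : forall k, definable_set (Ds k))
  (Hincr : forall k x, Ds k x -> Ds k.+1 x) :
  definable_set (closure (fun x => exists k, Ds k x)).
Proof.
have HmM : is_metric_le1 (@mdist L M) := proj1 HM.
set C := closure _.
have Hiso : forall a b : K, mdist a b = mdist (iota a) (iota b).
  move=> a b; exact: (Helem (FDist (Var L 0) (Var L 1)) (fun i => if i == 0%N then a else b)).
have Hsub : forall k m, (k <= m)%N -> forall x, Ds k x -> Ds m x.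
  move=> k m /subnKC <-; elim: (m - k)%N => [|j IH] x Hx; first by rewrite addn0.
  by rewrite addnS; apply: Hincr; apply: IH.
have Hfmono : forall k m x, (k <= m)%N -> dist_set (Ds m) x <= dist_set (Ds k) x.
  move=> k m x Hkm; apply: (dist_mono HmM) => a; exact: Hsub.
have DkC : forall k a, Ds k a -> C a.
  move=> k a Ha eps He; exists a; split; first by exists k.
  by rewrite tdist_refl.
have Hhf : forall k x, dist_set C x <= dist_set (Ds k) x.
  by move=> k x; apply: (dist_mono HmM) => a; apply: DkC.
have Happ : forall x eps, 0 < eps -> exists k, dist_set (Ds k) x <= dist_set C x + eps.
  move=> x eps He; apply: NNPP => Hn.
  have Hk : forall k, dist_set C x + eps < dist_set (Ds k) x.
    by move=> k; apply: Rnot_le_lt => H; apply: Hn; exists k.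
  suff : dist_set C x + eps/2 <= dist_set C x by lra.
  apply: dist_glb.
    have := dist_le1 HmM (Ds 0%N) x; have := Hk 0%N; lra.
  move=> a Ha; have [b [[k Hb] Hab]] := Ha (eps/2) ltac:(lra).
  have := dist_le HmM x Hb; have := tdist_tri HmM x a b; have := Hk k; lra.
split.
  move=> x Hx eps He; have [a [Ha Hxa]] := Hx (eps/2) ltac:(lra).
  have [b [Hb Hab]] := Ha (eps/2) ltac:(lra).
  exists b; split => //; have := tdist_tri HmM x a b; lra.
have StepA : forall eps, 0 < eps -> exists N, forall y : 'I_n -> K,
   dist_set (Ds N) (fun i => iota (y i)) - dist_set C (fun i => iota (y i)) <= eps.
  move=> eps He; apply: NNPP => Hn.
  have HY : forall N, exists y : 'I_n -> K,
      eps < dist_set (Ds N) (fun i => iota (y i)) - dist_set C (fun i => iota (y i)).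
    move=> N; apply: NNPP => Hn2; apply: Hn; exists N => y; apply: Rnot_lt_le => H; apply: Hn2; by exists y.
  pose Y N := proj1_sig (constructive_indefinite_description _ (HY N)).
  have HYp : forall N, eps < dist_set (Ds N) (fun i => iota (Y N i)) - dist_set C (fun i => iota (Y N i)).
    move=> N; exact: proj2_sig (constructive_indefinite_description _ (HY N)).
  have [s [a [Hs Ha]]] := cpt_tuple Hcpt Y.
  have [K0 HK0] := Happ (fun i => iota (a i)) (eps/3) ltac:(lra).
  have [N0 HN0] := Ha (eps/3) ltac:(lra).
  have Hj1 : (K0 <= s (maxn K0 N0))%N := leq_trans (leq_maxl _ _) (strict_ge Hs _).
  have Hj2 : (N0 <= maxn K0 N0)%N := leq_maxr _ _.
  have H0 := HYp (s (maxn K0 N0)).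
  move: H0 Hj1 Hj2 HK0; set y := (fun i => iota (Y (s (maxn K0 N0)) i)); set xa := (fun i => iota (a i)).
  move=> H0 Hj1 Hj2 HK0.
  have D1 : tdist (@mdist L M) y xa < eps/3.
    apply: tdist_lt; first lra. move=> i; rewrite /y /xa -Hiso; exact: HN0.
  have D2 : tdist (@mdist L M) xa y < eps/3 by rewrite (tdist_sym HmM).
  have := Hfmono _ _ y Hj1; have := dist_lip HmM (Ds K0) y xa; have := dist_lip HmM C xa y.
  lra.
have [Phi HPhi] : exists Phi : nat -> nat -> formula L, forall k, (forall j, fv_lt n (Phi k j)) /\
    forall eps, 0 < eps -> exists N, forall j, (N <= j)%N ->
      forall x, Rabs (evalt (Phi k j) x - dist_set (Ds k) x) <= eps.
  have Hex : forall k, exists phis : nat -> formula L, (forall j, fv_lt n (phis j)) /\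
    forall eps, 0 < eps -> exists N, forall j, (N <= j)%N ->
      forall x, Rabs (evalt (phis j) x - dist_set (Ds k) x) <= eps.
    by move=> k; exact: (proj2 (Hdef k)).
  exists (fun k => proj1_sig (constructive_indefinite_description _ (Hex k))) => k.
  exact: proj2_sig (constructive_indefinite_description _ (Hex k)).
have StepB : forall eps, 0 < eps -> exists N, forall m, (N <= m)%N -> forall x,
   dist_set (Ds N) x - dist_set (Ds m) x <= eps.
  move=> eps He; have [N HN] := StepA (eps/2) ltac:(lra).
  exists N => m Hmn x.
  have [Hf1 Ha1] := HPhi N; have [Hf2 Ha2] := HPhi m.
  have [J1 HJ1] := Ha1 (eps/8) ltac:(lra); have [J2 HJ2] := Ha2 (eps/8) ltac:(lra).
  set chi := FAdd (Phi N J1) (FScale (-1) (Phi m J2)).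
  have Hfv : fv_lt n chi by rewrite /fv_lt /= all_cat; apply/andP; split; [exact: Hf1|exact: Hf2].
  have Hev : forall (z : 'I_n -> M), evalt chi z = evalt (Phi N J1) z - evalt (Phi m J2) z.
    move=> z; rewrite /evalt /=; ring.
  have Bnd : forall z, evalt chi z - (dist_set (Ds N) z - dist_set (Ds m) z) <= eps/4 /\
      (dist_set (Ds N) z - dist_set (Ds m) z) - evalt chi z <= eps/4.
    move=> z; rewrite Hev; have [? ?] := abs_le_inv (HJ1 J1 (leqnn _) z);
    have [? ?] := abs_le_inv (HJ2 J2 (leqnn _) z); split; lra.
  have HKc : forall u : nat -> K, eval u chi <= 3*eps/4.
    move=> u; rewrite (Helem chi u) (eval_tuple _ Hfv).
    have [? ?] := Bnd (fun i : 'I_n => iota (u i)); have := HN (fun i : 'I_n => u i);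
    have := Hhf m (fun i : 'I_n => iota (u i)); cbv beta; lra.
  pose w := fun _ : nat => point K.
  have [HK1 _] := supn_prop HKc n.
  have HMw := HK1 w; rewrite (Helem _ w) in HMw.
  have HMB : forall u : nat -> M, eval u chi <= 1 + eps/4.
    move=> u; rewrite (eval_tuple _ Hfv).
    have [? ?] := Bnd (fun i : 'I_n => u i); have := dist_le1 HmM (Ds N) (fun i : 'I_n => u i);
    have := dist_ge0 HmM (Ds m) (fun i : 'I_n => u i); lra.
  have [_ [HM2 _]] := supn_prop HMB n.
  pose ux := fun i => if (i < n)%N then tval x i else iota (w i).
  have Hux := HM2 (fun i => iota (w i)) ux (fun i Hi => ltac:(by rewrite /ux ltnNge Hi)).
  have : eval ux chi = evalt chi x.
    rewrite /evalt; apply: (eval_fv_lt Hfv) => i Hi; by rewrite /ux Hi.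
  have [? ?] := Bnd x; lra.
have StepC : forall eps, 0 < eps -> exists N, forall k, (N <= k)%N -> forall x,
    dist_set (Ds k) x - dist_set C x <= eps.
  move=> eps He; have [N HN] := StepB (eps/2) ltac:(lra); exists N => k Hk x.
  have [k' Hk'] := Happ x (eps/2) ltac:(lra).
  have H1 := Hfmono _ _ x Hk. have H2 := HN (maxn k' N) (leq_maxr _ _) x.
  have H3 := Hfmono _ _ x (leq_maxl k' N). lra.
have HJ : forall k, exists J, forall j, (J <= j)%N -> forall x,
    Rabs (evalt (Phi k j) x - dist_set (Ds k) x) <= / INR k.+1.
  move=> k; apply: (proj2 (HPhi k)); apply: Rinv_0_lt_compat; apply: lt_0_INR; apply/ltP; done.
pose J k := proj1_sig (constructive_indefinite_description _ (HJ k)).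
have HJp : forall k j, (J k <= j)%N -> forall x,
    Rabs (evalt (Phi k j) x - dist_set (Ds k) x) <= / INR k.+1.
  move=> k; exact: proj2_sig (constructive_indefinite_description _ (HJ k)).
exists (fun k => Phi k (J k)); split; first by move=> k; apply: (proj1 (HPhi k)).
move=> eps He; have [N1 HN1] := StepC (eps/2) ltac:(lra).
have [N2 [HN2 HN2p]] := archimed_cor1 (eps/2) ltac:(lra).
exists (maxn N1 N2) => k Hk x.
have Hk1 : (N1 <= k)%N := leq_trans (leq_maxl _ _) Hk.
have Hk2 : (N2 <= k.+1)%N := leq_trans (leq_maxr _ _) (leqW Hk).
have Hinv : / INR k.+1 <= / INR N2.
  apply: Rinv_le_contravar; [apply: lt_0_INR; exact: HN2p | apply: le_INR; apply/leP; exact: Hk2].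
have [Ha Hb] := abs_le_inv (HJp k (J k) (leqnn _) x).
have := HN1 k Hk1 x; have := Hhf k x => H5 H6.
apply: Rabs_le; split; lra.
Qed.
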